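(* Let $c>0$ and $0<q_1<q_2\le 1$, and set $$\rho_1=\frac{\sin\frac{q_1\pi}{2}}{\sin\frac{(q_2-q_1)\pi}{2}},\qquad \rho_2=\frac{\sin\frac{q_2\pi}{2}}{\sin\frac{(q_2-q_1)\pi}{2}}.$$ Then $\rho_1>0$ and $\rho_2>1$. Consider the smooth parametric curve $\Gamma_{c,q_1,q_2}$ in the $(b,a)$-plane given by $$b(\omega)=\rho_1\omega^{q_2}-c\rho_2\omega^{-q_1},\qquad a(\omega)=c\rho_1\omega^{-q_2}-\rho_2\omega^{q_1},\qquad \omega>0.$$ Then $\Gamma_{c,q_1,q_2}$ is the graph of a smooth, decreasing, convex bijective function $a^\star=a^\star_{c,q_1,q_2}:\mathbb{R}\to\mathbb{R}$ (i.e. $a=a^\star(b)$), which satisfies $$a^\star(b)\le (-b)^{q_2/q_1}\,c^{\,1-q_2/q_1}\ \text{ if } b<0,\qquad a^\star(b)\le -b^{q_1/q_2}\ \text{ if } b\ge 0.$$ *)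

(* Defs.v *)
From Stdlib Require Import Reals.
From Coquelicot Require Import Coquelicot.
Open Scope R_scope.

Definition rho1 (q1 q2 : R) : R := sin (q1 * PI / 2) / sin ((q2 - q1) * PI / 2).
Definition rho2 (q1 q2 : R) : R := sin (q2 * PI / 2) / sin ((q2 - q1) * PI / 2).

Definition b_curve (c q1 q2 w : R) : R :=
  rho1 q1 q2 * Rpower w q2 - c * rho2 q1 q2 * Rpower w (- q1).
Definition a_curve (c q1 q2 w : R) : R :=
  c * rho1 q1 q2 * Rpower w (- q2) - rho2 q1 q2 * Rpower w q1.

Definition smooth (f : R -> R) : Prop := forall (n : nat) (x : R), ex_derive_n f n x.

Definition strictly_decreasing (f : R -> R) : Prop := forall x y, x < y -> f y < f x.

Definition convex_fun (f : R -> R) : Prop :=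
  forall x y t, 0 <= t <= 1 -> f (t * x + (1 - t) * y) <= t * f x + (1 - t) * f y.

Definition bijective_fun (f : R -> R) : Prop :=
  (forall x y, f x = f y -> x = y) /\ (forall y, exists x, f x = y).

Definition curve_is_graph (c q1 q2 : R) (f : R -> R) : Prop :=
  (forall w, 0 < w -> f (b_curve c q1 q2 w) = a_curve c q1 q2 w) /\
  (forall b, exists w, 0 < w /\ b_curve c q1 q2 w = b).

(* Main.v *)
Require Import Defs.
From Stdlib Require Import Reals Lra Lia Psatz ClassicalEpsilon.
From Coquelicot Require Import Coquelicot.
Open Scope R_scope.

Fixpoint SmN (n : nat) (f : R -> R) : Prop :=
  match n with O => True | S n => (forall x, ex_derive f x) /\ SmN n (Derive f) end.

Lemma SmN_ext n : forall f g, (forall x, f x = g x) -> SmN n f -> SmN n g.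
Proof.
  induction n as [|n IH]; simpl; auto.
  intros f g E [H1 H2]; split.
  - intro x; apply ex_derive_ext with f; auto.
  - apply IH with (Derive f); auto. intro x; apply Derive_ext; auto.
Qed.

Lemma SmN_S n : forall f, SmN (S n) f -> SmN n f.
Proof.
  induction n as [|n IH]; simpl; auto.
  intros f [H1 [H2 H3]]; split; auto.
  apply IH; simpl; auto.
Qed.

Lemma SmN_const n a : SmN n (fun _ => a).
Proof.
  revert a; induction n as [|n IH]; simpl; auto.
  intro a; split.
  - intro; apply ex_derive_const.
  - apply SmN_ext with (fun _ => 0). intro x; rewrite Derive_const; auto. apply IH.
Qed.

Lemma SmN_plus n : forall f g, SmN n f -> SmN n g -> SmN n (fun x => f x + g x).
Proof.
  induction n as [|n IH]; simpl; auto.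
  intros f g [F1 F2] [G1 G2]; split.
  - intro x; exact (ex_derive_plus f g x (F1 x) (G1 x)).
  - apply SmN_ext with (fun x => Derive f x + Derive g x).
    intro x; rewrite Derive_plus; auto. apply IH; auto.
Qed.

Lemma SmN_mult n : forall f g, SmN n f -> SmN n g -> SmN n (fun x => f x * g x).
Proof.
  induction n as [|n IH]; auto.
  intros f g HF HG. pose proof HF as [F1 F2]. pose proof HG as [G1 G2]. split.
  - intro x; apply ex_derive_mult; auto.
  - apply SmN_ext with (fun x => Derive f x * g x + f x * Derive g x).
    intro x; rewrite Derive_mult; auto.
    apply SmN_plus; apply IH; auto; apply SmN_S; auto.
Qed.

Lemma SmN_scal n a f : SmN n f -> SmN n (fun x => a * f x).
Proof. intro H; apply SmN_mult; auto; apply SmN_const. Qed.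

Lemma SmN_inv n : forall g, (forall x, g x <> 0) -> SmN n g -> SmN n (fun x => / g x).
Proof.
  induction n as [|n IH]; auto.
  intros g Hg HG. pose proof HG as [G1 G2]. split.
  - intro x; apply ex_derive_inv; auto.
  - apply SmN_ext with (fun x => -1 * (Derive g x * ((/ g x) * (/ g x)))).
    intro x; rewrite Derive_inv; auto. field; auto.
    apply SmN_scal, SmN_mult; auto. apply SmN_mult; apply IH; auto; apply SmN_S; auto.
Qed.

Lemma SmN_explin n : forall k, SmN n (fun x => exp (k * x)).
Proof.
  induction n as [|n IH]; simpl; auto.
  intro k; split.
  - intro x; auto_derive; auto.
  - apply SmN_ext with (fun x => k * exp (k * x)).
    intro x. apply sym_eq, is_derive_unique. auto_derive; auto; ring.
    apply SmN_scal, IH.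
Qed.

Lemma SmN_comp n : forall (g g' : R -> R) h, (forall x, is_derive g x (g' (g x))) ->
  (forall m, SmN m g') -> SmN n h -> SmN n (fun x => h (g x)).
Proof.
  induction n as [|n IH]; simpl; auto.
  intros g g' h Hg Hg' [H1 H2]; split.
  - intro x; apply ex_derive_comp; auto. eexists; apply Hg.
  - apply SmN_ext with (fun x => (fun L => Derive h L * g' L) (g x)).
    intro x; simpl. apply sym_eq, is_derive_unique.
    rewrite Rmult_comm. apply (is_derive_comp h g x). apply Derive_correct; auto. auto.
    apply (IH g g' (fun L => Derive h L * g' L)); auto. apply SmN_mult; auto.
Qed.

Lemma Derive_n_S f n x : Derive_n f (S n) x = Derive_n (Derive f) n x.
Proof.
  revert x; induction n as [|n IH]; intro x; simpl. reflexivity.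
  apply Derive_ext; intro t; apply IH.
Qed.

Lemma SmN_exd n : forall f, SmN (S n) f -> forall x, ex_derive (Derive_n f n) x.
Proof.
  induction n as [|n IH]; intros f [H1 H2] x.
  - simpl. apply ex_derive_ext with f; auto.
  - apply ex_derive_ext with (Derive_n (Derive f) n).
    intro t; rewrite Derive_n_S; auto. apply IH; auto.
Qed.

Lemma SmN_smooth f : (forall n, SmN n f) -> smooth f.
Proof.
  intros H n x; destruct n as [|n]. simpl; auto.
  simpl. apply SmN_exd; auto.
Qed.

Lemma deriv_mono f f' : (forall x, is_derive f x (f' x)) -> (forall x, 0 <= f' x) ->
  forall x y, x <= y -> f x <= f y.
Proof.
  intros Hd Hp x y Hxy. destruct (Req_dec x y) as [->|Hne]; [lra|].
  destruct (MVT_cor2 f f' x y) as [c [Hc _]]. lra.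
  intros; apply is_derive_Reals; auto.
  pose proof (Hp c). nra.
Qed.

Lemma deriv_convex f f' : (forall x, is_derive f x (f' x)) ->
  (forall x y, x <= y -> f' x <= f' y) -> convex_fun f.
Proof.
  intros Hd Hm.
  assert (Sup : forall u z, f z + f' z * (u - z) <= f u).
  { intros u z. destruct (Rtotal_order u z) as [H|[H|H]].
    - destruct (MVT_cor2 f f' u z) as [c [Hc Hc2]]; auto.
      intros; apply is_derive_Reals; auto.
      pose proof (Hm c z ltac:(lra)). nra.
    - subst; lra.
    - destruct (MVT_cor2 f f' z u) as [c [Hc Hc2]]; auto.
      intros; apply is_derive_Reals; auto.
      pose proof (Hm z c ltac:(lra)). nra. }
  intros x y t Ht.
  pose proof (Sup x (t * x + (1 - t) * y)). pose proof (Sup y (t * x + (1 - t) * y)).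
  nra.
Qed.

Lemma surj_ivt F F' y L1 L2 : (forall x, is_derive F x (F' x)) -> F L1 <= y -> y <= F L2 ->
  exists L, F L = y.
Proof.
  intros Hd H1 H2.
  assert (C : continuity F).
  { intro x. apply derivable_continuous_pt. exists (F' x). apply is_derive_Reals; auto. }
  destruct (IVT_gen F L1 L2 y C) as [L [_ HL]].
  split. apply Rle_trans with (F L1); auto; apply Rmin_l.
  apply Rle_trans with (F L2); auto; apply Rmax_r.
  eauto.
Qed.

Lemma exp_convex x y t : 0 <= t <= 1 -> exp (t * x + (1 - t) * y) <= t * exp x + (1 - t) * exp y.
Proof.
  intro Ht. set (m := t * x + (1 - t) * y).
  assert (Hx : exp m * (1 + (x - m)) <= exp x).
  { replace x with (m + (x - m)) at 2 by ring. rewrite exp_plus.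
    apply Rmult_le_compat_l. left; apply exp_pos. apply exp_ineq1_le. }
  assert (Hy : exp m * (1 + (y - m)) <= exp y).
  { replace y with (m + (y - m)) at 2 by ring. rewrite exp_plus.
    apply Rmult_le_compat_l. left; apply exp_pos. apply exp_ineq1_le. }
  assert (E : t * (exp m * (1 + (x - m))) + (1 - t) * (exp m * (1 + (y - m))) = exp m)
    by (unfold m; ring).
  nra.
Qed.

Lemma sin_tcos t : 0 <= t <= PI -> t * cos t <= sin t.
Proof.
  intro Ht. destruct (Req_dec t 0) as [->|Hne]. rewrite sin_0; lra.
  destruct (MVT_cor2 (fun t => sin t - t * cos t) (fun t => t * sin t) 0 t) as [c [Hc Hc2]].
  lra.
  intros c _. apply is_derive_Reals. auto_derive; auto. ring.
  rewrite sin_0, cos_0 in Hc.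
  assert (0 <= sin c) by (apply sin_ge_0; lra).
  assert (0 <= c * sin c * (t - 0)) by (apply Rmult_le_pos; [apply Rmult_le_pos|]; lra).
  lra.
Qed.

Lemma sin_ratio x y : 0 < x -> x <= y -> y <= PI / 2 -> x * sin y <= y * sin x.
Proof.
  intros Hx Hxy Hy. pose proof PI_RGT_0.
  destruct (Req_dec x y) as [->|Hne]. lra.
  destruct (MVT_cor2 (fun t => sin t / t) (fun t => (t * cos t - sin t) / t ^ 2) x y) as [c [Hc Hc2]].
  lra.
  intros c Hc. apply is_derive_Reals. auto_derive. lra. field. lra.
  assert (c * cos c - sin c <= 0) by (pose proof (sin_tcos c); lra).
  assert ((c * cos c - sin c) / c ^ 2 <= 0).
  { unfold Rdiv. apply Rmult_le_0_r; auto. left; apply Rinv_0_lt_compat; nra. }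
  assert (sin y / y <= sin x / x) by nra.
  assert (HH : sin y / y * (x * y) <= sin x / x * (x * y)) by (apply Rmult_le_compat_r; nra).
  replace (sin y / y * (x * y)) with (x * sin y) in HH by (field; lra).
  replace (sin x / x * (x * y)) with (y * sin x) in HH by (field; lra).
  lra.
Qed.

Lemma sin_sq_diff a b : sin b ^ 2 - sin a ^ 2 = sin (a + b) * sin (b - a).
Proof.
  rewrite sin_plus, sin_minus. pose proof (sin2_cos2 a). pose proof (sin2_cos2 b).
  unfold Rsqr in *. nra.
Qed.

Lemma rho_facts q1 q2 : 0 < q1 -> q1 < q2 -> q2 <= 1 ->
  let r1 := rho1 q1 q2 in let r2 := rho2 q1 q2 in
  0 < r1 /\ 1 < r2 /\ r1 < r2 /\ q1 * r2 <= q2 * r1 /\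
  (q2 - q1) * r2 <= q2 * (r2 * r2 - r1 * r1).
Proof.
  intros h1 h12 h2 r1 r2. pose proof PI_RGT_0 as HPI.
  set (A := q1 * PI / 2). set (B := q2 * PI / 2). set (D := (q2 - q1) * PI / 2).
  assert (HA : 0 < A < PI / 2) by (unfold A; split; nra).
  assert (HB : A < B <= PI / 2) by (unfold A, B; split; nra).
  assert (HD : 0 < D /\ D < B) by (unfold D, B; split; nra).
  assert (EBD : B - A = D). { unfold A, B, D. field. }
  assert (sA : 0 < sin A) by (apply sin_gt_0; lra).
  assert (sD : 0 < sin D) by (apply sin_gt_0; lra).
  assert (sAB : sin A < sin B) by (apply sin_increasing_1; lra).
  assert (sDB : sin D < sin B) by (apply sin_increasing_1; lra).
  assert (Er1 : r1 = sin A / sin D) by reflexivity.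
  assert (Er2 : r2 = sin B / sin D) by reflexivity.
  assert (R1 : A * sin B <= B * sin A) by (apply sin_ratio; lra).
  assert (R2 : D * sin B <= B * sin D) by (apply sin_ratio; lra).
  assert (SS : sin D <= sin (A + B)).
  { destruct (Rle_dec (A + B) (PI / 2)).
    - apply sin_incr_1; lra.
    - rewrite <- (sin_PI_x (A + B)). apply sin_incr_1; lra. }
  assert (Q : sin B ^ 2 - sin A ^ 2 = sin (A + B) * sin D) by (rewrite <- EBD; apply sin_sq_diff).
  assert (R1' : q1 * sin B <= q2 * sin A).
  { apply Rmult_le_reg_l with (PI / 2). lra.
    replace (PI / 2 * (q1 * sin B)) with (A * sin B) by (unfold A; field).
    replace (PI / 2 * (q2 * sin A)) with (B * sin A) by (unfold B; field). lra. }
  assert (R2' : (q2 - q1) * sin B <= q2 * sin D).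
  { apply Rmult_le_reg_l with (PI / 2). lra.
    replace (PI / 2 * ((q2 - q1) * sin B)) with (D * sin B) by (unfold D; field).
    replace (PI / 2 * (q2 * sin D)) with (B * sin D) by (unfold B; field). lra. }
  rewrite Er1, Er2. repeat split.
  - apply Rdiv_lt_0_compat; auto.
  - replace 1 with (sin D / sin D) by (field; lra).
    apply Rmult_lt_compat_r; auto. apply Rinv_0_lt_compat; auto.
  - apply Rmult_lt_compat_r; auto. apply Rinv_0_lt_compat; auto.
  - unfold Rdiv. rewrite <- !Rmult_assoc. apply Rmult_le_compat_r; auto. left; apply Rinv_0_lt_compat; auto.
  - replace (q2 * (sin B / sin D * (sin B / sin D) - sin A / sin D * (sin A / sin D)))
      with (q2 * (sin B ^ 2 - sin A ^ 2) / (sin D * sin D)) by (field; lra).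
    rewrite Q.
    replace ((q2 - q1) * (sin B / sin D)) with ((q2 - q1) * sin B * sin D / (sin D * sin D)) by (field; lra).
    unfold Rdiv. apply Rmult_le_compat_r. left; apply Rinv_0_lt_compat; nra.
    assert (X1 : (q2 - q1) * sin B * sin D <= q2 * sin D * sin D) by (apply Rmult_le_compat_r; lra).
    assert (X2 : q2 * sin D * sin D <= q2 * sin (A + B) * sin D).
    { apply Rmult_le_compat_r. lra. apply Rmult_le_compat_l; lra. }
    lra.
Qed.

Definition Hyp (c q1 q2 r1 r2 : R) : Prop :=
  0 < c /\ 0 < q1 /\ q1 < q2 /\ 0 < r1 /\ 1 < r2 /\ r1 < r2 /\ q1 * r2 <= q2 * r1 /\
  (q2 - q1) * r2 <= q2 * (r2 * r2 - r1 * r1).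

Definition Bf c q1 q2 r1 r2 L := r1 * exp (q2 * L) - c * r2 * exp (- q1 * L).
Definition Af c q1 q2 r1 r2 L := c * r1 * exp (- q2 * L) - r2 * exp (q1 * L).
Definition Bd c q1 q2 r1 r2 L := q2 * r1 * exp (q2 * L) + q1 * c * r2 * exp (- q1 * L).
Definition Ad c q1 q2 r1 r2 L := - (q2 * c * r1 * exp (- q2 * L)) - q1 * r2 * exp (q1 * L).
Definition Bdd c q1 q2 r1 r2 L := q2 * q2 * r1 * exp (q2 * L) - q1 * q1 * c * r2 * exp (- q1 * L).
Definition Add c q1 q2 r1 r2 L := q2 * q2 * c * r1 * exp (- q2 * L) - q1 * q1 * r2 * exp (q1 * L).
Definition Mf c q1 q2 r1 r2 L := Ad c q1 q2 r1 r2 L / Bd c q1 q2 r1 r2 L.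

Lemma dBf c q1 q2 r1 r2 L : is_derive (Bf c q1 q2 r1 r2) L (Bd c q1 q2 r1 r2 L).
Proof. unfold Bf, Bd. auto_derive; auto. ring. Qed.
Lemma dAf c q1 q2 r1 r2 L : is_derive (Af c q1 q2 r1 r2) L (Ad c q1 q2 r1 r2 L).
Proof. unfold Af, Ad. auto_derive; auto. ring. Qed.
Lemma dBd c q1 q2 r1 r2 L : is_derive (Bd c q1 q2 r1 r2) L (Bdd c q1 q2 r1 r2 L).
Proof. unfold Bdd, Bd. auto_derive; auto. ring. Qed.
Lemma dAd c q1 q2 r1 r2 L : is_derive (Ad c q1 q2 r1 r2) L (Add c q1 q2 r1 r2 L).
Proof. unfold Add, Ad. auto_derive; auto. ring. Qed.

Lemma expN k L : exp (- k * L) = / exp (k * L).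
Proof. rewrite <- exp_Ropp. f_equal. ring. Qed.

Lemma Bd_pos c q1 q2 r1 r2 L : Hyp c q1 q2 r1 r2 -> 0 < Bd c q1 q2 r1 r2 L.
Proof.
  intros (hc & h1 & h12 & hr1 & hr2 & _). unfold Bd.
  pose proof (exp_pos (q2 * L)). pose proof (exp_pos (- q1 * L)).
  assert (0 < q2 * r1 * exp (q2 * L)) by (repeat apply Rmult_lt_0_compat; lra).
  assert (0 < q1 * c * r2 * exp (- q1 * L)) by (repeat apply Rmult_lt_0_compat; lra).
  lra.
Qed.

Lemma Bf_incr c q1 q2 r1 r2 x y : Hyp c q1 q2 r1 r2 -> x < y ->
  Bf c q1 q2 r1 r2 x < Bf c q1 q2 r1 r2 y.
Proof.
  intros (hc & h1 & h12 & hr1 & hr2 & _) Hxy. unfold Bf.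
  assert (exp (q2 * x) < exp (q2 * y)) by (apply exp_increasing; nra).
  assert (exp (- q1 * y) < exp (- q1 * x)) by (apply exp_increasing; nra).
  assert (r1 * exp (q2 * x) < r1 * exp (q2 * y)) by (apply Rmult_lt_compat_l; lra).
  assert (c * r2 * exp (- q1 * y) < c * r2 * exp (- q1 * x)) by (apply Rmult_lt_compat_l; nra).
  lra.
Qed.

Lemma Af_decr c q1 q2 r1 r2 x y : Hyp c q1 q2 r1 r2 -> x < y ->
  Af c q1 q2 r1 r2 y < Af c q1 q2 r1 r2 x.
Proof.
  intros (hc & h1 & h12 & hr1 & hr2 & _) Hxy. unfold Af.
  assert (exp (q1 * x) < exp (q1 * y)) by (apply exp_increasing; nra).
  assert (exp (- q2 * y) < exp (- q2 * x)) by (apply exp_increasing; nra).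
  assert (r2 * exp (q1 * x) < r2 * exp (q1 * y)) by (apply Rmult_lt_compat_l; lra).
  assert (c * r1 * exp (- q2 * y) < c * r1 * exp (- q2 * x)) by (apply Rmult_lt_compat_l; nra).
  lra.
Qed.

Lemma exp_le1 x : x <= 0 -> exp x <= 1.
Proof. intro H. rewrite <- exp_0. destruct H. left; apply exp_increasing; auto. subst; lra. Qed.

Lemma Bf_surj c q1 q2 r1 r2 y : Hyp c q1 q2 r1 r2 -> exists L, Bf c q1 q2 r1 r2 L = y.
Proof.
  intro H. pose proof H as (hc & h1 & h12 & hr1 & hr2 & _).
  set (T1 := (Rabs y + r1) / (c * r2 * q1)).
  set (T2 := (Rabs y + c * r2) / (r1 * q2)).
  assert (0 <= T1) by (unfold T1; apply Rdiv_le_0_compat; [pose proof (Rabs_pos y); nra | repeat apply Rmult_lt_0_compat; lra]).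
  assert (0 <= T2) by (unfold T2; apply Rdiv_le_0_compat; [pose proof (Rabs_pos y); nra | repeat apply Rmult_lt_0_compat; lra]).
  apply (surj_ivt _ _ y (- T1) T2 (dBf c q1 q2 r1 r2)).
  - unfold Bf. pose proof (exp_le1 (q2 * - T1) ltac:(nra)).
    pose proof (exp_ineq1_le (- q1 * - T1)). pose proof (Rle_abs (- y)). rewrite Rabs_Ropp in *.
    assert (E : c * r2 * q1 * T1 = Rabs y + r1) by (unfold T1; field; nra).
    assert (c * r2 * (1 + - q1 * - T1) <= c * r2 * exp (- q1 * - T1)) by (apply Rmult_le_compat_l; nra).
    assert (r1 * exp (q2 * - T1) <= r1) by nra.
    nra.
  - unfold Bf. pose proof (exp_le1 (- q1 * T2) ltac:(nra)).
    pose proof (exp_ineq1_le (q2 * T2)). pose proof (Rle_abs y).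
    assert (E : r1 * q2 * T2 = Rabs y + c * r2) by (unfold T2; field; nra).
    assert (r1 * (1 + q2 * T2) <= r1 * exp (q2 * T2)) by (apply Rmult_le_compat_l; nra).
    assert (c * r2 * exp (- q1 * T2) <= c * r2 * 1) by (apply Rmult_le_compat_l; nra).
    nra.
Qed.

Lemma Af_surj c q1 q2 r1 r2 y : Hyp c q1 q2 r1 r2 -> exists L, Af c q1 q2 r1 r2 L = y.
Proof.
  intro H. pose proof H as (hc & h1 & h12 & hr1 & hr2 & _).
  set (T1 := (Rabs y + r2) / (c * r1 * q2)).
  set (T2 := (Rabs y + c * r1) / (r2 * q1)).
  assert (0 <= T1) by (unfold T1; apply Rdiv_le_0_compat; [pose proof (Rabs_pos y); nra | repeat apply Rmult_lt_0_compat; lra]).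
  assert (0 <= T2) by (unfold T2; apply Rdiv_le_0_compat; [pose proof (Rabs_pos y); nra | repeat apply Rmult_lt_0_compat; lra]).
  destruct (surj_ivt (fun L => - Af c q1 q2 r1 r2 L) (fun L => - Ad c q1 q2 r1 r2 L) (- y) (- T1) T2)
    as [L HL].
  - intro x. apply (is_derive_opp (Af c q1 q2 r1 r2)), dAf.
  - unfold Af. pose proof (exp_le1 (q1 * - T1) ltac:(nra)).
    pose proof (exp_ineq1_le (- q2 * - T1)). pose proof (Rle_abs y).
    assert (E : c * r1 * q2 * T1 = Rabs y + r2) by (unfold T1; field; nra).
    assert (c * r1 * (1 + - q2 * - T1) <= c * r1 * exp (- q2 * - T1)) by (apply Rmult_le_compat_l; nra).
    assert (r2 * exp (q1 * - T1) <= r2 * 1) by (apply Rmult_le_compat_l; nra).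
    nra.
  - unfold Af. pose proof (exp_le1 (- q2 * T2) ltac:(nra)).
    pose proof (exp_ineq1_le (q1 * T2)). pose proof (Rle_abs (- y)). rewrite Rabs_Ropp in *.
    assert (E : r2 * q1 * T2 = Rabs y + c * r1) by (unfold T2; field; nra).
    assert (r2 * (1 + q1 * T2) <= r2 * exp (q1 * T2)) by (apply Rmult_le_compat_l; nra).
    assert (c * r1 * exp (- q2 * T2) <= c * r1 * 1) by (apply Rmult_le_compat_l; nra).
    nra.
  - exists L; lra.
Qed.

Definition Binv c q1 q2 r1 r2 y : R :=
  epsilon (inhabits 0) (fun L => Bf c q1 q2 r1 r2 L = y).

Lemma Binv_spec c q1 q2 r1 r2 y : Hyp c q1 q2 r1 r2 -> Bf c q1 q2 r1 r2 (Binv c q1 q2 r1 r2 y) = y.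
Proof. intro H. unfold Binv. apply epsilon_spec. apply Bf_surj; auto. Qed.

Lemma Bf_inj c q1 q2 r1 r2 x y : Hyp c q1 q2 r1 r2 -> Bf c q1 q2 r1 r2 x = Bf c q1 q2 r1 r2 y -> x = y.
Proof.
  intros H E. destruct (Rtotal_order x y) as [h|[h|h]]; auto;
  [pose proof (Bf_incr _ _ _ _ _ _ _ H h) | pose proof (Bf_incr _ _ _ _ _ _ _ H h)]; lra.
Qed.

Lemma Binv_Bf c q1 q2 r1 r2 L : Hyp c q1 q2 r1 r2 -> Binv c q1 q2 r1 r2 (Bf c q1 q2 r1 r2 L) = L.
Proof. intro H. apply (Bf_inj c q1 q2 r1 r2); auto. apply Binv_spec; auto. Qed.

Lemma Binv_incr c q1 q2 r1 r2 x y : Hyp c q1 q2 r1 r2 -> x < y ->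
  Binv c q1 q2 r1 r2 x < Binv c q1 q2 r1 r2 y.
Proof.
  intros H h. destruct (Rlt_le_dec (Binv c q1 q2 r1 r2 x) (Binv c q1 q2 r1 r2 y)) as [|h2]; auto.
  exfalso. destruct h2 as [h2|h2].
  - pose proof (Bf_incr _ _ _ _ _ _ _ H h2). rewrite !Binv_spec in H0; auto. lra.
  - assert (x = y). { rewrite <- (Binv_spec c q1 q2 r1 r2 x), <- (Binv_spec c q1 q2 r1 r2 y), h2; auto. }
    lra.
Qed.

Lemma Binv_cont c q1 q2 r1 r2 x : Hyp c q1 q2 r1 r2 -> continuity_pt (Binv c q1 q2 r1 r2) x.
Proof.
  intro H. intros eps Heps.
  set (g := Binv c q1 q2 r1 r2). set (f := Bf c q1 q2 r1 r2).
  set (L := g x).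
  assert (E : f L = x) by (apply Binv_spec; auto).
  pose proof (Bf_incr c q1 q2 r1 r2 L (L + eps) H ltac:(lra)).
  pose proof (Bf_incr c q1 q2 r1 r2 (L - eps) L H ltac:(lra)).
  fold f in H0, H1.
  exists (Rmin (f (L + eps) - x) (x - f (L - eps))). split.
  - apply Rmin_glb_lt; lra.
  - intros y [_ Hy]. simpl in *. unfold R_dist in *.
    pose proof (Rmin_l (f (L + eps) - x) (x - f (L - eps))).
    pose proof (Rmin_r (f (L + eps) - x) (x - f (L - eps))).
    apply Rabs_def2 in Hy. apply Rabs_def1.
    + destruct (Rlt_le_dec (g y - g x) eps) as [|h]; auto. exfalso.
      assert (h' : L + eps <= g y) by (unfold L; lra).
      assert (K : f (L + eps) <= f (g y)).
      { destruct h' as [h'|h']. left; apply Bf_incr; auto. rewrite h'; lra. }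
      unfold f, g in K; rewrite Binv_spec in K; auto. fold f in K. lra.
    + destruct (Rlt_le_dec (- eps) (g y - g x)) as [|h]; auto. exfalso.
      assert (h' : g y <= L - eps) by (unfold L; lra).
      assert (K : f (g y) <= f (L - eps)).
      { destruct h' as [h'|h']. left; apply Bf_incr; auto. rewrite h'; lra. }
      unfold f, g in K; rewrite Binv_spec in K; auto. fold f in K. lra.
Qed.

Lemma dBinv c q1 q2 r1 r2 x : Hyp c q1 q2 r1 r2 ->
  is_derive (Binv c q1 q2 r1 r2) x (/ Bd c q1 q2 r1 r2 (Binv c q1 q2 r1 r2 x)).
Proof.
  intro H.
  set (f := Bf c q1 q2 r1 r2). set (g := Binv c q1 q2 r1 r2).
  pose (Prf := fun a (_ : g (x - 1) <= a <= g (x + 1)) =>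
    exist (fun l => derivable_pt_abs f a l) (Bd c q1 q2 r1 r2 a)
      (proj1 (is_derive_Reals _ _ _) (dBf c q1 q2 r1 r2 a))).
  assert (Hincr : g (x - 1) <= g x <= g (x + 1)).
  { split; left; apply Binv_incr; auto; lra. }
  assert (Hid : forall x0, x - 1 <= x0 <= x + 1 -> comp f g x0 = id x0).
  { intros; unfold comp, id, f, g; apply Binv_spec; auto. }
  assert (Hne : derive_pt f (g x) (Prf (g x) Hincr) <> 0).
  { simpl. pose proof (Bd_pos c q1 q2 r1 r2 (g x) H). lra. }
  pose proof (Ranalysis5.derivable_pt_lim_recip_interv f g (x - 1) (x + 1) x Prf
    (Binv_cont c q1 q2 r1 r2 x H) ltac:(lra) ltac:(lra) Hincr Hid Hne) as D.
  simpl in D. apply is_derive_Reals. unfold g in D. rewrite Rdiv_1_l in D. exact D.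
Qed.

Lemma Mf_mono c q1 q2 r1 r2 x y : Hyp c q1 q2 r1 r2 -> x <= y ->
  Mf c q1 q2 r1 r2 x <= Mf c q1 q2 r1 r2 y.
Proof.
  intro H. pose proof H as (hc & h1 & h12 & hr1 & hr2 & hr12 & k1 & k2).
  apply (deriv_mono _ (fun L => (Add c q1 q2 r1 r2 L * Bd c q1 q2 r1 r2 L
     - Ad c q1 q2 r1 r2 L * Bdd c q1 q2 r1 r2 L) / (Bd c q1 q2 r1 r2 L ^ 2))).
  - intro L. unfold Mf. apply is_derive_div. apply dAd. apply dBd.
    pose proof (Bd_pos c q1 q2 r1 r2 L H). lra.
  - intro L. pose proof (Bd_pos c q1 q2 r1 r2 L H) as HB.
    apply Rdiv_le_0_compat; [|nra].
    unfold Add, Bd, Ad, Bdd. rewrite !expN.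
    pose proof (exp_pos (q1 * L)) as E1. pose proof (exp_pos (q2 * L)) as E2.
    set (X := exp (q1 * L)) in *. set (Y := exp (q2 * L)) in *.
    set (K := q1 * q2 * r1 * r2 * (q2 - q1)).
    set (N := (q2 * q2 * c * r1 * / Y - q1 * q1 * r2 * X) *
      (q2 * r1 * Y + q1 * c * r2 * / X) -
      (- (q2 * c * r1 * / Y) - q1 * r2 * X) *
      (q2 * q2 * r1 * Y - q1 * q1 * c * r2 * / X)).
    assert (EN : N * (X * Y) = 2 * c * (q2 * q2 * q2 * r1 * r1 - q1 * q1 * q1 * r2 * r2) * (X * Y)
       + K * (c * c + (X * Y) * (X * Y))).
    { unfold N, K. field. split; intro; lra. }
    assert (P1 : q1 * r2 * (q1 * r2) <= q2 * r1 * (q2 * r1)) by (apply Rmult_le_compat; nra).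
    assert (P2 : 0 <= q2 * q2 * q2 * r1 * r1 - q1 * q1 * q1 * r2 * r2).
    { assert (q1 * (q1 * r2 * (q1 * r2)) <= q1 * (q2 * r1 * (q2 * r1))) by (apply Rmult_le_compat_l; lra).
      assert (q1 * (q2 * r1 * (q2 * r1)) <= q2 * (q2 * r1 * (q2 * r1))) by (apply Rmult_le_compat_r; nra).
      nra. }
    assert (PK : 0 <= K) by (unfold K; repeat apply Rmult_le_pos; lra).
    assert (PXY : 0 < X * Y) by nra.
    assert (0 <= N * (X * Y)).
    { rewrite EN. apply Rplus_le_le_0_compat.
      repeat apply Rmult_le_pos; lra. apply Rmult_le_pos; nra. }
    nra.
Qed.

Lemma ln_divX u X : 0 < u -> 0 < X -> ln (u / X) = ln u - ln X.
Proof. intros. unfold Rdiv. rewrite ln_mult, ln_Rinv; auto. apply Rinv_0_lt_compat; auto. Qed.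

Lemma bound_pos c q1 q2 r1 r2 L : Hyp c q1 q2 r1 r2 -> 0 < Bf c q1 q2 r1 r2 L ->
  Af c q1 q2 r1 r2 L <= - Rpower (Bf c q1 q2 r1 r2 L) (q1 / q2).
Proof.
  intros H HB. pose proof H as (hc & h1 & h12 & hr1 & hr2 & hr12 & k1 & k2).
  unfold Bf, Af in *. rewrite !expN in *.
  pose proof (exp_pos (q1 * L)) as E1. pose proof (exp_pos (q2 * L)) as E2.
  assert (lX : ln (exp (q1 * L)) = q1 * L) by apply ln_exp.
  assert (lY : ln (exp (q2 * L)) = q2 * L) by apply ln_exp.
  set (X := exp (q1 * L)) in *. set (Y := exp (q2 * L)) in *.
  set (s := X * Y). assert (Hs : 0 < s) by (unfold s; nra).
  set (u := r1 * s - c * r2).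
  assert (Eb : r1 * Y - c * r2 * / X = u / X) by (unfold u, s; field; lra).
  rewrite Eb in *.
  assert (Hu : 0 < u).
  { assert (0 < u / X * X) by nra. replace (u / X * X) with u in H0 by (field; lra). auto. }
  set (t := q1 / q2).
  assert (Ht : 0 <= t <= 1).
  { unfold t; split. apply Rdiv_le_0_compat; lra.
    apply Rmult_le_reg_r with q2; [lra|]. unfold Rdiv; rewrite Rmult_assoc, Rinv_l; lra. }
  set (P := Rpower (u / X) t).
  assert (C : P * Y = exp (t * ln u + (1 - t) * ln s)).
  { unfold P, Rpower, Y. rewrite <- exp_plus. f_equal.
    rewrite ln_divX; auto. unfold s. rewrite ln_mult; auto. fold X Y. rewrite lX, lY.
    unfold t. field. lra. }
  pose proof (exp_convex (ln u) (ln s) t Ht) as Cv.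
  rewrite !exp_ln in Cv; auto. rewrite <- C in Cv.
  assert (Ar : t * u + (1 - t) * s <= r2 * s - c * r1).
  { set (al := q2 * (r2 - 1) - q1 * (r1 - 1)).
    assert (Hal : 0 <= al) by (unfold al; nra).
    set (Dd := q2 * (r2 * s - c * r1) - q1 * u - (q2 - q1) * s).
    assert (ED : r1 * Dd = al * u + c * (q2 * (r2 * r2 - r1 * r1) - (q2 - q1) * r2))
      by (unfold Dd, al, u; ring).
    assert (0 <= r1 * Dd) by (rewrite ED; apply Rplus_le_le_0_compat; [apply Rmult_le_pos|apply Rmult_le_pos]; lra).
    assert (HD : 0 <= Dd) by nra.
    assert (E : r2 * s - c * r1 - (t * u + (1 - t) * s) = Dd / q2) by (unfold Dd, t; field; lra).
    assert (0 <= Dd / q2) by (apply Rdiv_le_0_compat; lra). lra. }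
  apply Rmult_le_reg_r with Y; [lra|].
  replace ((c * r1 * / Y - r2 * X) * Y) with (c * r1 - r2 * s) by (unfold s; field; lra).
  lra.
Qed.

Lemma bound_neg c q1 q2 r1 r2 L : Hyp c q1 q2 r1 r2 -> Bf c q1 q2 r1 r2 L < 0 ->
  Af c q1 q2 r1 r2 L <= Rpower (- Bf c q1 q2 r1 r2 L) (q2 / q1) * Rpower c (1 - q2 / q1).
Proof.
  intros H HB. pose proof H as (hc & h1 & h12 & hr1 & hr2 & hr12 & k1 & k2).
  unfold Bf, Af in *. rewrite !expN in *.
  pose proof (exp_pos (q1 * L)) as E1. pose proof (exp_pos (q2 * L)) as E2.
  assert (lX : ln (exp (q1 * L)) = q1 * L) by apply ln_exp.
  set (X := exp (q1 * L)) in *. set (Y := exp (q2 * L)) in *.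
  set (s := X * Y). assert (Hs : 0 < s) by (unfold s; nra).
  set (v := c * r2 - r1 * s).
  assert (Eb : - (r1 * Y - c * r2 * / X) = v / X) by (unfold v, s; field; lra).
  rewrite Eb in *.
  assert (Hv : 0 < v).
  { assert (0 < v / X * X) by (apply Rmult_lt_0_compat; lra).
    replace (v / X * X) with v in H0 by (field; lra). auto. }
  set (p := q2 / q1). set (t := q1 / q2).
  assert (Ht : 0 <= t <= 1).
  { unfold t; split. apply Rdiv_le_0_compat; lra.
    apply Rmult_le_reg_r with q2; [lra|]. unfold Rdiv; rewrite Rmult_assoc, Rinv_l; lra. }
  set (P := Rpower (v / X) p * Rpower c (1 - p)).
  set (Z := exp (p * ln v + (1 - p) * ln c)).
  assert (HZ : 0 < Z) by apply exp_pos.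
  assert (C : P * Y = Z).
  { unfold P, Rpower, Y, Z. rewrite <- !exp_plus. f_equal.
    rewrite ln_divX; auto. rewrite lX. unfold p. field. lra. }
  pose proof (exp_convex (p * ln v + (1 - p) * ln c) (ln c) t Ht) as Cv.
  replace (t * (p * ln v + (1 - p) * ln c) + (1 - t) * ln c) with (ln v) in Cv
    by (unfold t, p; field; lra).
  rewrite !exp_ln in Cv; auto. fold Z in Cv.
  apply Rmult_le_reg_r with Y; [lra|].
  replace ((c * r1 * / Y - r2 * X) * Y) with (c * r1 - r2 * s) by (unfold s; field; lra).
  rewrite C.
  destruct (Rle_dec (c * r1 - r2 * s) 0) as [|Hn]; [lra|].
  assert (Hn' : 0 < c * r1 - r2 * s) by lra.
  set (al := q2 * (r2 - 1) - q1 * (r1 - 1)).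
  set (Dd := q2 * v - (q2 - q1) * c - q1 * (c * r1 - r2 * s)).
  assert (ED : r2 * Dd = c * (q2 * (r2 * r2 - r1 * r1) - (q2 - q1) * r2) + (c * r1 - r2 * s) * (q2 * r1 - q1 * r2))
    by (unfold Dd, v; ring).
  assert (0 <= r2 * Dd) by (rewrite ED; apply Rplus_le_le_0_compat; apply Rmult_le_pos; lra).
  assert (HD : 0 <= Dd) by nra.
  assert (Cv2 : q2 * v <= q1 * Z + (q2 - q1) * c).
  { assert (E : q2 * (t * Z + (1 - t) * c) = q1 * Z + (q2 - q1) * c) by (unfold t; field; lra).
    rewrite <- E. apply Rmult_le_compat_l; lra. }
  assert (q1 * (c * r1 - r2 * s) <= q1 * Z) by (unfold Dd in HD; lra).
  nra.
Qed.

Lemma bound_zero c q1 q2 r1 r2 L : Hyp c q1 q2 r1 r2 -> Bf c q1 q2 r1 r2 L = 0 ->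
  Af c q1 q2 r1 r2 L <= 0.
Proof.
  intros H HB. pose proof H as (hc & h1 & h12 & hr1 & hr2 & hr12 & k1 & k2).
  unfold Bf, Af in *. rewrite !expN in *.
  pose proof (exp_pos (q1 * L)) as E1. pose proof (exp_pos (q2 * L)) as E2.
  set (X := exp (q1 * L)) in *. set (Y := exp (q2 * L)) in *.
  assert (Hs : r1 * (X * Y) = c * r2).
  { replace (r1 * (X * Y)) with ((r1 * Y - c * r2 * / X) * X + c * r2) by (field; lra). rewrite HB; ring. }
  apply Rmult_le_reg_r with (r1 * Y); [nra|].
  replace ((c * r1 * / Y - r2 * X) * (r1 * Y)) with (c * r1 * r1 - r2 * (r1 * (X * Y))) by (field; lra).
  rewrite Hs, Rmult_0_l. assert (r1 * r1 <= r2 * r2) by nra. assert (0 <= c * (r2 * r2 - r1 * r1)) by (apply Rmult_le_pos; lra). lra.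
Qed.

Theorem lemma1 (c q1 q2 : R) (hc : 0 < c) (hq1 : 0 < q1) (hq12 : q1 < q2) (hq2 : q2 <= 1) :
  0 < rho1 q1 q2 /\ 1 < rho2 q1 q2 /\
  exists astar : R -> R,
    curve_is_graph c q1 q2 astar /\
    smooth astar /\ strictly_decreasing astar /\ convex_fun astar /\ bijective_fun astar /\
    (forall b, b < 0 -> astar b <= Rpower (- b) (q2 / q1) * Rpower c (1 - q2 / q1)) /\
    astar 0 <= 0 /\
    (forall b, 0 < b -> astar b <= - Rpower b (q1 / q2)).
Proof.
  destruct (rho_facts q1 q2 hq1 hq12 hq2) as (hr1 & hr2 & hr12 & k1 & k2).
  set (r1 := rho1 q1 q2) in *. set (r2 := rho2 q1 q2) in *.
  assert (H : Hyp c q1 q2 r1 r2) by (repeat split; auto).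
  split; [auto|split; [auto|]].
  set (g := Binv c q1 q2 r1 r2).
  exists (fun x => Af c q1 q2 r1 r2 (g x)).
  assert (Ebc : forall w, b_curve c q1 q2 w = Bf c q1 q2 r1 r2 (ln w)) by reflexivity.
  assert (Eac : forall w, a_curve c q1 q2 w = Af c q1 q2 r1 r2 (ln w)) by reflexivity.
  assert (Hdec : strictly_decreasing (fun x => Af c q1 q2 r1 r2 (g x))).
  { intros x y Hxy. apply Af_decr; auto. apply Binv_incr; auto. }
  split; [|split; [|split; [|split; [|split; [|split; [|split]]]]]].
  - split.
    + intros w Hw. rewrite Ebc, Eac. unfold g. rewrite Binv_Bf; auto.
    + intro b. exists (exp (g b)). split. apply exp_pos.
      rewrite Ebc, ln_exp. apply Binv_spec; auto.
  - apply SmN_smooth. intro n.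
    apply (SmN_comp n g (fun L => / Bd c q1 q2 r1 r2 L)).
    + intro x. apply dBinv; auto.
    + intro m. apply SmN_inv.
      * intro x. pose proof (Bd_pos c q1 q2 r1 r2 x H). lra.
      * apply SmN_ext with (fun L => (q2 * r1) * exp (q2 * L) + (q1 * c * r2) * exp (- q1 * L)).
        intro; unfold Bd; ring.
        apply SmN_plus; apply SmN_scal; apply SmN_explin.
    + apply SmN_ext with (fun L => (c * r1) * exp (- q2 * L) + (- r2) * exp (q1 * L)).
      intro; unfold Af; ring.
      apply SmN_plus; apply SmN_scal; apply SmN_explin.
  - exact Hdec.
  - apply (deriv_convex _ (fun x => Mf c q1 q2 r1 r2 (g x))).
    + intro x. unfold Mf, Rdiv. rewrite Rmult_comm.
      apply (is_derive_comp (Af c q1 q2 r1 r2) g x). apply dAf. apply dBinv; auto.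
    + intros x y Hxy. apply Mf_mono; auto.
      destruct Hxy as [Hxy|Hxy]. left; apply Binv_incr; auto. subst; lra.
  - split.
    + intros x y E. destruct (Rtotal_order x y) as [h|[h|h]]; auto;
      [pose proof (Hdec _ _ h) | pose proof (Hdec _ _ h)]; lra.
    + intro y. destruct (Af_surj c q1 q2 r1 r2 y H) as [L HL].
      exists (Bf c q1 q2 r1 r2 L). unfold g; rewrite Binv_Bf; auto.
  - intros b Hb. pose proof (Binv_spec c q1 q2 r1 r2 b H) as Eg. fold g in Eg.
    pose proof (bound_neg c q1 q2 r1 r2 (g b) H) as K. rewrite Eg in K. apply K; auto.
  - pose proof (Binv_spec c q1 q2 r1 r2 0 H) as Eg. fold g in Eg.
    apply bound_zero; auto.
  - intros b Hb. pose proof (Binv_spec c q1 q2 r1 r2 b H) as Eg. fold g in Eg.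
    pose proof (bound_pos c q1 q2 r1 r2 (g b) H) as K. rewrite Eg in K. apply K; auto.
Qed.
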